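(* Let $t\geq 0$ be an integer. There exists a partition $\mathcal N_t$ of the set $\mathbb N$ of nonnegative integers such that (i) each class $N\in\mathcal N_t$ is a residue class modulo $2^r$ for some $r\ge 0$, i.e. of the form $a+2^r\mathbb N$ with $0\leq a<2^r$; (ii) for every integer $k$ the set $B(k,t)=\{n\in \mathbb N:s(n+t)-s(n)=k\}$ is a finite (possibly empty) union of classes of $\mathcal N_t$. In particular, each set $B(k,t)$ has an asymptotic density $\delta(k,t)$. Moreover, for all $k\in\mathbb{Z}$ and all integers $t\geq 1$ these densities satisfy \[ \delta(k,1)=\begin{cases}2^{k-2},&k\leq 1,\\0&\text{otherwise,}\end{cases}\qquad \delta(k,2t)=\delta(k,t),\qquad \delta(k,2t+1)=\tfrac 12 \delta(k-1,t)+\tfrac 12\delta(k+1,t+1). \]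
   Context: For a nonnegative integer $n$, $s(n)$ denotes the binary sum of digits of $n$ (the number of digits $1$ in its base-$2$ expansion). *)

(* Defs.v *)
From Stdlib Require Import Reals Lra Lia ZArith Arith List.
Open Scope R_scope.

(* Binary digit sum s(n): number of 1 digits in base 2.
   aux uses fuel; fuel n suffices since n/2 < n for n > 0. *)
Fixpoint digsum_aux (fuel n : nat) : nat :=
  match fuel with
  | O => O
  | S f => (n mod 2 + digsum_aux f (n / 2))%nat
  end.
Definition s (n : nat) : nat := digsum_aux n n.

Definition inB (k : Z) (t n : nat) : Prop :=
  (Z.of_nat (s (n + t)) - Z.of_nat (s n))%Z = k.

Definition inBb (k : Z) (t n : nat) : bool :=
  Z.eqb (Z.of_nat (s (n + t)) - Z.of_nat (s n))%Z k.

Definition countB (k : Z) (t N : nat) : nat :=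
  List.length (List.filter (inBb k t) (List.seq 0 N)).

Definition has_densityB (k : Z) (t : nat) (d : R) : Prop :=
  Un_cv (fun N => INR (countB k t N) / INR N) d.

Definition in_class (r a n : nat) : Prop := (n mod 2 ^ r = a)%nat.

Definition is_dyadic_partition (P : nat -> nat -> Prop) : Prop :=
  (forall r a, P r a -> (a < 2 ^ r)%nat) /\
  (forall n, exists r a, P r a /\ in_class r a n) /\
  (forall r a r' a' n, P r a -> P r' a' -> in_class r a n -> in_class r' a' n ->
     r = r' /\ a = a').

(* Main.v *)
Require Import Defs.
From Stdlib Require Import Reals ZArith Arith List Lia Lra ZifyNat ClassicalEpsilon.
Open Scope R_scope.
Ltac dlia := zify; Z.to_euclidean_division_equations; lia.


Lemma aux0 f : digsum_aux f 0 = 0%nat.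
Proof. induction f; simpl; auto. Qed.

Lemma aux_fuel : forall f1 f2 n, (n <= f1)%nat -> (n <= f2)%nat -> digsum_aux f1 n = digsum_aux f2 n.
Proof.
  induction f1; intros f2 n H1 H2.
  - assert (n = 0%nat) by lia; subst. now rewrite !aux0.
  - destruct f2.
    + assert (n = 0%nat) by lia; subst. now rewrite !aux0.
    + cbn [digsum_aux]. f_equal. apply IHf1; dlia.
Qed.

Lemma s_rec n : s n = (n mod 2 + s (n / 2))%nat.
Proof.
  unfold s. destruct n as [|n]. { reflexivity. }
  cbn [digsum_aux]. f_equal. apply aux_fuel; dlia.
Qed.

Lemma s2 q b : (b < 2)%nat -> s (2 * q + b) = (b + s q)%nat.
Proof.
  intros Hb. rewrite s_rec. f_equal; [dlia|]. f_equal; dlia.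
Qed.

Definition split2 (B1 B2 : nat -> Prop) (n : nat) : Prop :=
  (n mod 2 = 0%nat /\ B1 (n / 2)%nat) \/ (n mod 2 = 1%nat /\ B2 (n / 2)%nat).

Lemma inB_even k t n : inB k (2 * t) n <-> split2 (inB k t) (inB k t) n.
Proof.
  unfold split2, inB.
  assert (E : n = (2 * (n/2) + n mod 2)%nat) by dlia.
  assert (E2 : (n + 2*t = 2 * (n/2 + t) + n mod 2)%nat) by dlia.
  rewrite E2. rewrite E at 3. rewrite !s2 by dlia.
  assert (n mod 2 = 0 \/ n mod 2 = 1)%nat by dlia.
  split; [intros H'|intros [[? H']|[? H']]]; try (rewrite <- H'); try lia.
Qed.

Lemma inB_odd k t n : inB k (2 * t + 1) n <-> split2 (inB (k - 1) t) (inB (k + 1) (t + 1)) n.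
Proof.
  unfold split2, inB.
  assert (E : n = (2 * (n/2) + n mod 2)%nat) by dlia.
  assert (n mod 2 = 0 \/ n mod 2 = 1)%nat as [Hm|Hm] by dlia.
  - assert (E2 : (n + (2*t+1) = 2 * (n/2 + t) + 1)%nat) by dlia.
    rewrite E2. rewrite E at 2. rewrite !s2 by dlia. rewrite Hm. lia.
  - assert (E2 : (n + (2*t+1) = 2 * (n/2 + (t+1)) + 0)%nat) by dlia.
    rewrite E2. rewrite E at 2. rewrite !s2 by dlia. rewrite Hm. lia.
Qed.

Lemma inB0 k n : inB k 0 n <-> k = 0%Z.
Proof. unfold inB. rewrite Nat.add_0_r. lia. Qed.

Lemma inBb_spec k t n : inBb k t n = true <-> inB k t n.
Proof. unfold inBb, inB. apply Z.eqb_eq. Qed.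

Lemma class_bound r a n : in_class r a n -> (a < 2 ^ r)%nat.
Proof. unfold in_class. intros <-. apply Nat.mod_upper_bound. apply Nat.pow_nonzero. lia. Qed.

Lemma class_S r a n : in_class (S r) a n <-> (n mod 2 = a mod 2 /\ in_class r (a/2) (n/2))%nat.
Proof.
  unfold in_class. rewrite Nat.pow_succ_r'. rewrite Nat.Div0.mod_mul_r.
  assert (Hp : (2 ^ r <> 0)%nat) by (apply Nat.pow_nonzero; lia).
  pose proof (Nat.mod_upper_bound (n/2) (2^r) Hp).
  assert (EA : a = (2 * (a/2) + a mod 2)%nat) by dlia.
  assert (n mod 2 < 2)%nat by dlia. assert (a mod 2 < 2)%nat by dlia.
  remember (n mod 2)%nat as b. remember (a mod 2)%nat as c.
  remember ((n/2) mod 2^r)%nat as Y. remember (a/2)%nat as A.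
  lia.
Qed.

Definition P0 (r a : nat) : Prop := r = 0%nat /\ a = 0%nat.

Definition T (P Q : nat -> nat -> Prop) (r a : nat) : Prop :=
  match r with
  | O => False
  | S r' => (a mod 2 = 0 /\ P r' (a / 2)) \/ (a mod 2 = 1 /\ Q r' (a / 2))
  end%nat.

Fixpoint P1 (r a : nat) : Prop :=
  match r with
  | O => False
  | S r' => (a mod 2 = 0 /\ P0 r' (a / 2)) \/ (a mod 2 = 1 /\ P1 r' (a / 2))
  end%nat.

Lemma P1_T r a : P1 r a <-> T P0 P1 r a.
Proof. destruct r; reflexivity. Qed.

Lemma bound_step r a : (a / 2 < 2 ^ r)%nat -> (a < 2 ^ S r)%nat.
Proof. rewrite Nat.pow_succ_r'. intros. dlia. Qed.

Definition bounded (P : nat -> nat -> Prop) := forall r a, P r a -> (a < 2 ^ r)%nat.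
Definition covers (P : nat -> nat -> Prop) := forall n, exists r a, P r a /\ in_class r a n.
Definition uniqueP (P : nat -> nat -> Prop) := forall r a r' a' n, P r a -> P r' a' -> in_class r a n -> in_class r' a' n ->
     r = r' /\ a = a'.

Lemma part_iff P : is_dyadic_partition P <-> bounded P /\ covers P /\ uniqueP P.
Proof. reflexivity. Qed.

Lemma P0_part : is_dyadic_partition P0.
Proof.
  split; [|split].
  - intros r a [-> ->]. simpl; lia.
  - intros n. exists 0%nat, 0%nat. split; [split; auto|]. unfold in_class. simpl. dlia.
  - intros r a r' a' n [-> ->] [-> ->] _ _. auto.
Qed.

Lemma class_mk r a n : in_class r a (n / 2) -> in_class (S r) (2 * a + n mod 2) n.
Proof.
  intros H. apply class_S. split.
  - dlia.
  - replace ((2 * a + n mod 2) / 2)%nat with a by dlia. exact H.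
Qed.

Lemma T_bounded P Q : bounded P -> bounded Q -> bounded (T P Q).
Proof.
  intros HP HQ [|r] a H; [destruct H|]. apply bound_step.
  destruct H as [[_ H]|[_ H]]; [apply HP|apply HQ]; exact H.
Qed.

Lemma T_covers P Q : covers P -> covers Q -> covers (T P Q).
Proof.
  intros HP HQ n.
  assert (n mod 2 = 0 \/ n mod 2 = 1)%nat as [Hm|Hm] by dlia.
  - destruct (HP (n/2)%nat) as (r & a & Hr & Hc).
    exists (S r), (2 * a + n mod 2)%nat. split; [|now apply class_mk].
    left. rewrite Hm. split; [dlia|]. replace ((2*a+0)/2)%nat with a by dlia. exact Hr.
  - destruct (HQ (n/2)%nat) as (r & a & Hr & Hc).
    exists (S r), (2 * a + n mod 2)%nat. split; [|now apply class_mk].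
    right. rewrite Hm. split; [dlia|]. replace ((2*a+1)/2)%nat with a by dlia. exact Hr.
Qed.

Lemma T_unique P Q : uniqueP P -> uniqueP Q -> uniqueP (T P Q).
Proof.
  intros HP HQ [|r] a [|r'] a' n H H'; cbn [T P1] in H, H'; try contradiction; try destruct H as [[Hm H]|[Hm H]]; try destruct H' as [[Hm' H']|[Hm' H']].
  all: intros C C'; apply class_S in C as [C1 C2]; apply class_S in C' as [C1' C2'].
  all: assert (EA : a = (2 * (a/2) + a mod 2)%nat) by dlia.
  all: assert (EA' : a' = (2 * (a'/2) + a' mod 2)%nat) by dlia.
  all: try lia.
  - destruct (HP _ _ _ _ _ H H' C2 C2'). split; [congruence|lia].
  - destruct (HQ _ _ _ _ _ H H' C2 C2'). split; [congruence|lia].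
Qed.

Lemma T_part P Q : is_dyadic_partition P -> is_dyadic_partition Q -> is_dyadic_partition (T P Q).
Proof.
  rewrite !part_iff. intros (?&?&?) (?&?&?).
  split; [apply T_bounded|split; [apply T_covers|apply T_unique]]; auto.
Qed.

Lemma P1_part : is_dyadic_partition P1.
Proof.
  destruct P0_part as (B0 & C0 & U0).
  split; [|split].
  - intros r. induction r as [|r IH]; intros a H; [destruct H|].
    apply bound_step. destruct H as [[_ H]|[_ H]]; [apply B0|apply IH]; exact H.
  - intros n. induction n as [n IH] using (well_founded_induction lt_wf).
    assert (n mod 2 = 0 \/ n mod 2 = 1)%nat as [Hm|Hm] by dlia.
    + destruct (C0 (n/2)%nat) as (r & a & Hr & Hc).
      exists (S r), (2 * a + n mod 2)%nat. split; [|now apply class_mk].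
      left. rewrite Hm. split; [dlia|]. replace ((2*a+0)/2)%nat with a by dlia. exact Hr.
    + destruct (IH (n/2)%nat) as (r & a & Hr & Hc); [dlia|].
      exists (S r), (2 * a + n mod 2)%nat. split; [|now apply class_mk].
      right. rewrite Hm. split; [dlia|]. replace ((2*a+1)/2)%nat with a by dlia. exact Hr.
  - intros r. induction r as [|r IH];
    intros a [|r'] a' n H H'; cbn [T P1] in H, H'; try contradiction; try destruct H as [[Hm H]|[Hm H]]; try destruct H' as [[Hm' H']|[Hm' H']].
    all: intros C C'; apply class_S in C as [C1 C2]; apply class_S in C' as [C1' C2'].
    all: assert (EA : a = (2 * (a/2) + a mod 2)%nat) by dlia.
    all: assert (EA' : a' = (2 * (a'/2) + a' mod 2)%nat) by dlia.
    all: try lia.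
    + destruct (U0 _ _ _ _ _ H H' C2 C2'). split; [congruence|lia].
    + destruct (IH _ _ _ _ H H' C2 C2'). split; [congruence|lia].
Qed.

Definition unionl (l : list (nat * nat)) (n : nat) : Prop :=
  exists p, In p l /\ in_class (fst p) (snd p) n.

Lemma T_union (P Q : nat -> nat -> Prop) (B1 B2 : nat -> Prop) l1 l2 :
  (forall p, In p l1 -> P (fst p) (snd p)) -> (forall n, B1 n <-> unionl l1 n) ->
  (forall p, In p l2 -> Q (fst p) (snd p)) -> (forall n, B2 n <-> unionl l2 n) ->
  exists l, (forall p, In p l -> T P Q (fst p) (snd p)) /\ (forall n, split2 B1 B2 n <-> unionl l n).
Proof.
  intros H1 E1 H2 E2.
  exists (map (fun p => (S (fst p), 2 * snd p)%nat) l1 ++ map (fun p => (S (fst p), 2 * snd p + 1)%nat) l2).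
  split.
  - intros p Hp. apply in_app_or in Hp as [Hp|Hp]; apply in_map_iff in Hp as [[r a] [<- Hp]]; cbn [T fst snd].
    + left. split; [dlia|]. replace (2*a/2)%nat with a by dlia. exact (H1 _ Hp).
    + right. split; [dlia|]. replace ((2*a+1)/2)%nat with a by dlia. exact (H2 _ Hp).
  - intros n. unfold split2, unionl. split.
    + intros [[Hm HB]|[Hm HB]].
      * apply E1 in HB as [[r a] [Hin Hc]]. exists (S r, 2 * a)%nat. split.
        -- apply in_or_app. left. apply in_map_iff. exists (r, a). auto.
        -- cbn [fst snd] in *. replace (2 * a)%nat with (2 * a + n mod 2)%nat by lia. now apply class_mk.
      * apply E2 in HB as [[r a] [Hin Hc]]. exists (S r, 2 * a + 1)%nat. split.
        -- apply in_or_app. right. apply in_map_iff. exists (r, a). auto.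
        -- cbn [fst snd] in *. replace (2 * a + 1)%nat with (2 * a + n mod 2)%nat by lia. now apply class_mk.
    + intros [p [Hp Hc]]. apply in_app_or in Hp as [Hp|Hp]; apply in_map_iff in Hp as [[r a] [<- Hp]]; cbn [fst snd] in Hc;
      apply class_S in Hc as [Hc1 Hc2].
      * left. split; [dlia|]. apply E1. exists (r, a). split; auto. cbn [fst snd].
        replace (2*a/2)%nat with a in Hc2 by dlia. exact Hc2.
      * right. split; [dlia|]. apply E2. exists (r, a). split; auto. cbn [fst snd].
        replace ((2*a+1)/2)%nat with a in Hc2 by dlia. exact Hc2.
Qed.

Definition goodl (P : nat -> nat -> Prop) (Bp : nat -> Prop) :=
  exists l, (forall p, In p l -> P (fst p) (snd p)) /\ (forall n, Bp n <-> unionl l n).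

Lemma t0_list k : goodl P0 (inB k 0).
Proof.
  destruct (Z.eq_dec k 0) as [->|Hk].
  - exists ((0,0)%nat :: nil). split.
    + intros p [<-|[]]. split; reflexivity.
    + intros n. rewrite inB0. split; auto. intros _. exists (0,0)%nat. split; [left; auto|].
      unfold in_class; simpl. dlia.
  - exists nil. split; [intros p []|]. intros n. rewrite inB0. split; [lia|]. intros [p [[] _]].
Qed.

Lemma inB1_rec k n : inB k 1 n <-> split2 (inB (k - 1) 0) (inB (k + 1) 1) n.
Proof. exact (inB_odd k 0 n). Qed.

Lemma B1_big : forall n k, (k >= 2)%Z -> ~ inB k 1 n.
Proof.
  intros n. induction n as [n IH] using (well_founded_induction lt_wf).
  intros k Hk H. apply inB1_rec in H as [[_ H]|[Hm H]].
  - apply inB0 in H. lia.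
  - exact (IH (n/2)%nat ltac:(dlia) (k+1)%Z ltac:(lia) H).
Qed.

Lemma t1_list : forall j k, (k >= 2 - Z.of_nat j)%Z -> goodl P1 (inB k 1).
Proof.
  induction j as [|j IH]; intros k Hk.
  - exists nil. split; [intros p []|]. intros n. split; [|intros [p [[] _]]].
    intros H. exfalso. apply (B1_big n k); auto; lia.
  - destruct (IH (k + 1)%Z) as (l2 & H2 & E2); [lia|].
    destruct (t0_list (k - 1)) as (l1 & H1 & E1).
    destruct (T_union P0 P1 _ _ l1 l2 H1 E1 H2 E2) as (l & Hl & El).
    exists l. split.
    + intros p Hp. apply P1_T. auto.
    + intros n. rewrite inB1_rec. apply El.
Qed.

Lemma part_all : forall t, exists P, is_dyadic_partition P /\ forall k, goodl P (inB k t).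
Proof.
  intros t. induction t as [t IH] using (well_founded_induction lt_wf).
  destruct t as [|[|t']].
  - exists P0. split; [apply P0_part|apply t0_list].
  - exists P1. split; [apply P1_part|]. intros k. apply (t1_list (Z.to_nat (2 - k))). lia.
  - set (t := S (S t')).
    destruct (Nat.Even_or_Odd t) as [[u Hu]|[u Hu]].
    + destruct (IH u) as (P & HP & HB); [lia|].
      exists (T P P). split; [now apply T_part|]. intros k.
      destruct (HB k) as (l1 & H1 & E1).
      destruct (T_union P P _ _ l1 l1 H1 E1 H1 E1) as (l & Hl & El).
      exists l. split; auto. intros n. rewrite Hu, inB_even. apply El.
    + destruct (IH u) as (P & HP & HB); [lia|].
      destruct (IH (u + 1)%nat) as (Q & HQ & HBQ); [lia|].
      exists (T P Q). split; [now apply T_part|]. intros k.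
      destruct (HB (k - 1)%Z) as (l1 & H1 & E1).
      destruct (HBQ (k + 1)%Z) as (l2 & H2 & E2).
      destruct (T_union P Q _ _ l1 l2 H1 E1 H2 E2) as (l & Hl & El).
      exists l. split; auto. intros n. rewrite Hu, inB_odd. apply El.
Qed.

Definition cnt (f : nat -> bool) (N : nat) : nat := length (filter f (seq 0 N)).

Lemma cnt_S f N : cnt f (S N) = (cnt f N + if f N then 1 else 0)%nat.
Proof.
  unfold cnt. rewrite seq_S, filter_app, length_app. simpl. destruct (f N); reflexivity.
Qed.

Lemma cnt_split (g f1 f2 : nat -> bool) :
  (forall n, g n = if Nat.eqb (n mod 2) 0 then f1 (n/2)%nat else f2 (n/2)%nat) ->
  forall N, cnt g N = (cnt f1 ((N + 1) / 2) + cnt f2 (N / 2))%nat.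
Proof.
  intros Hg N. induction N as [|N IH]; [reflexivity|].
  rewrite cnt_S, IH, Hg.
  destruct (Nat.Even_or_Odd N) as [[q ->]|[q ->]].
  - replace ((2*q) mod 2)%nat with 0%nat by dlia. simpl Nat.eqb.
    replace ((S (2*q) + 1)/2)%nat with (S q) by dlia.
    replace ((2*q + 1)/2)%nat with q by dlia.
    replace (S (2*q) / 2)%nat with q by dlia.
    replace (2*q / 2)%nat with q by dlia.
    rewrite cnt_S. lia.
  - replace ((2*q+1) mod 2)%nat with 1%nat by dlia. simpl Nat.eqb.
    replace ((S (2*q+1) + 1)/2)%nat with (S q) by dlia.
    replace ((2*q + 1 + 1)/2)%nat with (S q) by dlia.
    replace (S (2*q+1) / 2)%nat with (S q) by dlia.
    replace ((2*q+1) / 2)%nat with q by dlia.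
    rewrite (cnt_S f2 q). lia.
Qed.

Lemma cnt_const (b : bool) N : cnt (fun _ => b) N = if b then N else 0%nat.
Proof.
  induction N as [|N IH]; [destruct b; reflexivity|]. rewrite cnt_S, IH. destruct b; lia.
Qed.

Lemma cv_ev (u : nat -> R) l : (forall n, (1 <= n)%nat -> u n = l) -> Un_cv u l.
Proof.
  intros H eps Heps. exists 1%nat. intros n Hn. unfold R_dist. rewrite H by lia.
  replace (l - l) with 0 by ring. rewrite Rabs_R0. exact Heps.
Qed.

Lemma Un_cv_ext (u v : nat -> R) l : (forall n, u n = v n) -> Un_cv u l -> Un_cv v l.
Proof.
  intros E H eps Heps. destruct (H eps Heps) as [N HN]. exists N. intros n Hn. rewrite <- E. auto.
Qed.

Lemma half_lim (a h : nat -> nat) d :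
  Un_cv (fun M => INR (a M) / INR M) d ->
  (forall N, (N <= 2 * h N + 1 /\ 2 * h N <= N + 1)%nat) ->
  Un_cv (fun N => INR (a (h N)) / INR N) (d / 2).
Proof.
  intros Ha Hh eps Heps.
  destruct (Ha (eps/2)) as [M0 HM0]; [lra|].
  pose proof (Rabs_pos d) as Hd.
  set (c := eps / (2 * (Rabs d + 1))).
  assert (Hc : 0 < c) by (unfold c; apply Rdiv_lt_0_compat; lra).
  assert (Hce : c * (2 * (Rabs d + 1)) = eps) by (unfold c; field; lra).
  destruct (archimed_cor1 c Hc) as [N0 [HN0 HN0pos]].
  exists (Nat.max (2*M0+3) N0). intros N HN. unfold R_dist.
  pose proof (Hh N) as [H1 H2].
  assert (hM: (h N >= M0)%nat) by lia.
  specialize (HM0 (h N) hM). unfold R_dist in HM0.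
  assert (Hz : 1 <= INR N) by (apply (le_INR 1); lia).
  assert (Hy : 1 <= INR (h N)) by (apply (le_INR 1); lia).
  assert (Hzy : INR N <= 2 * INR (h N) + 1).
  { apply le_INR in H1. rewrite plus_INR, mult_INR in H1. simpl INR in H1. lra. }
  assert (Hyz : 2 * INR (h N) <= INR N + 1).
  { apply le_INR in H2. rewrite mult_INR, plus_INR in H2. simpl INR in H2. lra. }
  assert (Hw : / INR N <= / INR N0).
  { apply Rinv_le_contravar. apply lt_0_INR; lia. apply le_INR; lia. }
  set (x := INR (a (h N))) in *. set (y := INR (h N)) in *. set (z := INR N) in *.
  set (w := / z).
  assert (Hzw : z * w = 1) by (unfold w; field; lra).
  assert (Hwpos : 0 < w) by (unfold w; apply Rinv_0_lt_compat; lra).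
  set (e := x / y - d) in *.
  assert (Hx : x = (e + d) * y) by (unfold e; field; lra).
  replace (x / z - d / 2) with (e * (y * w) + d * ((2 * y - z) * w / 2)).
  2:{ unfold w. rewrite Hx. field. lra. }
  assert (Hyw1 : y * w <= 1) by nra.
  assert (Hyw0 : 0 <= y * w) by nra.
  assert (Hq : Rabs ((2 * y - z) * w / 2) <= w).
  { apply Rabs_le. split; nra. }
  eapply Rle_lt_trans. apply Rabs_triang.
  rewrite !Rabs_mult. rewrite (Rabs_right y) by lra. rewrite (Rabs_right w) by lra.
  assert (Rabs e * y * w <= Rabs e) by (pose proof (Rabs_pos e); nra).
  assert (Rabs d * Rabs ((2 * y - z) * w / 2) <= Rabs d * w) by (apply Rmult_le_compat_l; auto).
  assert (Rabs d * w <= Rabs d * c) by (apply Rmult_le_compat_l; unfold w; lra).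
  nra.
Qed.

Lemma dens_transfer (g f1 f2 : nat -> bool) d1 d2 :
  (forall n, g n = if Nat.eqb (n mod 2) 0 then f1 (n/2)%nat else f2 (n/2)%nat) ->
  Un_cv (fun N => INR (cnt f1 N) / INR N) d1 ->
  Un_cv (fun N => INR (cnt f2 N) / INR N) d2 ->
  Un_cv (fun N => INR (cnt g N) / INR N) ((d1 + d2) / 2).
Proof.
  intros Hg C1 C2.
  apply Un_cv_ext with (fun N => INR (cnt f1 ((N+1)/2)) / INR N + INR (cnt f2 (N/2)) / INR N).
  { intros N. rewrite (cnt_split g f1 f2 Hg N), plus_INR. unfold Rdiv. ring. }
  replace ((d1 + d2) / 2) with (d1 / 2 + d2 / 2) by field.
  apply CV_plus.
  - apply (half_lim (cnt f1) (fun N => (N+1)/2)%nat d1 C1). intros N; cbv beta; dlia.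
  - apply (half_lim (cnt f2) (fun N => N/2)%nat d2 C2). intros N; cbv beta; dlia.
Qed.

Lemma inBb_even k t n : inBb k (2 * t) n = if Nat.eqb (n mod 2) 0 then inBb k t (n/2)%nat else inBb k t (n/2)%nat.
Proof.
  apply Bool.eq_iff_eq_true. rewrite !inBb_spec, inB_even. unfold split2.
  assert (n mod 2 = 0 \/ n mod 2 = 1)%nat as [Hm|Hm] by dlia; rewrite Hm; simpl Nat.eqb;
  rewrite inBb_spec; intuition lia.
Qed.

Lemma inBb_odd k t n : inBb k (2 * t + 1) n =
  if Nat.eqb (n mod 2) 0 then inBb (k - 1) t (n/2)%nat else inBb (k + 1) (t + 1) (n/2)%nat.
Proof.
  apply Bool.eq_iff_eq_true. rewrite !inBb_spec, inB_odd. unfold split2.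
  assert (n mod 2 = 0 \/ n mod 2 = 1)%nat as [Hm|Hm] by dlia; rewrite Hm; simpl Nat.eqb;
  rewrite inBb_spec; intuition lia.
Qed.

Definition f1d (k : Z) : R := if Z.leb k 1 then powerRZ 2 (k - 2) else 0.

Lemma cnt_ext f g N : (forall n, f n = g n) -> cnt f N = cnt g N.
Proof. intros H. unfold cnt. f_equal. apply filter_ext. auto. Qed.

Lemma dens_const (b : bool) : Un_cv (fun N => INR (cnt (fun _ => b) N) / INR N) (if b then 1 else 0).
Proof.
  apply cv_ev. intros n Hn. rewrite cnt_const. assert (0 < INR n) by (apply lt_0_INR; lia).
  destruct b; [field; lra|]. simpl. unfold Rdiv. ring.
Qed.

Lemma dens_t0 k : has_densityB k 0 (if Z.eqb k 0 then 1 else 0).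
Proof.
  unfold has_densityB.
  apply Un_cv_ext with (fun N => INR (cnt (fun _ => Z.eqb k 0) N) / INR N); [|apply dens_const].
  intros N. unfold countB. change (length (filter (inBb k 0) (seq 0 N))) with (cnt (inBb k 0) N).
  f_equal. f_equal. apply cnt_ext. intros n. apply Bool.eq_iff_eq_true. rewrite inBb_spec, inB0. lia.
Qed.

Lemma dens_t1 : forall j k, (k >= 2 - Z.of_nat j)%Z -> has_densityB k 1 (f1d k).
Proof.
  induction j as [|j IH]; intros k Hk.
  - unfold has_densityB, f1d. replace (Z.leb k 1) with false by (symmetry; apply Z.leb_gt; lia).
    apply Un_cv_ext with (fun N => INR (cnt (fun _ => false) N) / INR N); [|apply dens_const].
    intros N. unfold countB. change (length (filter (inBb k 1) (seq 0 N))) with (cnt (inBb k 1) N).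
    f_equal. f_equal. apply cnt_ext. intros n. apply Bool.eq_iff_eq_true. rewrite inBb_spec.
    split; [discriminate|intros H; exfalso; apply (B1_big n k); [lia|exact H]].
  - destruct (Z_le_gt_dec (2 - Z.of_nat j) k) as [Hk'|Hk']; [apply IH; lia|].
    pose proof (IH (k + 1)%Z ltac:(lia)) as H2.
    pose proof (dens_t0 (k - 1)) as H1.
    pose proof (dens_transfer (inBb k 1) (inBb (k - 1) 0) (inBb (k + 1) 1) _ _ (fun n => inBb_odd k 0 n) H1 H2) as H.
    unfold has_densityB, countB. fold (cnt (inBb k 1)).
    replace (f1d k) with (((if (k - 1 =? 0)%Z then 1 else 0) + f1d (k + 1)) / 2); [exact H|].
    unfold f1d. destruct (Z.eq_dec k 1) as [->|Hk1].
    + simpl. field.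
    + replace ((k - 1 =? 0)%Z) with false by (symmetry; apply Z.eqb_neq; lia). replace ((k <=? 1)%Z) with true by (symmetry; apply Z.leb_le; lia).
      replace ((k + 1 <=? 1)%Z) with true by (symmetry; apply Z.leb_le; lia).
      replace (k + 1 - 2)%Z with ((k - 2) + 1)%Z by lia. rewrite powerRZ_add by lra. simpl. field.
Qed.

Lemma dens_exists : forall t k, exists d, has_densityB k t d.
Proof.
  intros t. induction t as [t IH] using (well_founded_induction lt_wf). intros k.
  destruct t as [|[|t']].
  - eexists. apply dens_t0.
  - eexists. apply (dens_t1 (Z.to_nat (2 - k))). lia.
  - set (t := S (S t')).
    destruct (Nat.Even_or_Odd t) as [[u Hu]|[u Hu]].
    + destruct (IH u ltac:(lia) k) as [d Hd].
      exists ((d + d) / 2). unfold has_densityB, countB. fold (cnt (inBb k t)). rewrite Hu.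
      exact (dens_transfer _ _ _ _ _ (fun n => inBb_even k u n) Hd Hd).
    + destruct (IH u ltac:(lia) (k - 1)%Z) as [d1 Hd1].
      destruct (IH (u + 1)%nat ltac:(lia) (k + 1)%Z) as [d2 Hd2].
      exists ((d1 + d2) / 2). unfold has_densityB, countB. fold (cnt (inBb k t)). rewrite Hu.
      exact (dens_transfer _ _ _ _ _ (fun n => inBb_odd k u n) Hd1 Hd2).
Qed.

Theorem lemma2p1 :
  (forall t : nat, exists P : nat -> nat -> Prop,
     is_dyadic_partition P /\
     forall k : Z, exists l : list (nat * nat),
       (forall p, In p l -> P (fst p) (snd p)) /\
       (forall n : nat, inB k t n <-> exists p, In p l /\ in_class (fst p) (snd p) n))
  /\
  (exists delta : Z -> nat -> R,
     (forall (k : Z) (t : nat), has_densityB k t (delta k t)) /\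
     (forall k : Z, delta k 1%nat = if Z.leb k 1 then powerRZ 2 (k - 2) else 0) /\
     (forall (k : Z) (t : nat), (1 <= t)%nat -> delta k (2 * t)%nat = delta k t) /\
     (forall (k : Z) (t : nat), (1 <= t)%nat ->
        delta k (2 * t + 1)%nat = / 2 * delta (k - 1)%Z t + / 2 * delta (k + 1)%Z (t + 1)%nat)).
Proof.
  split.
  - intros t. destruct (part_all t) as (P & HP & HB). exists P. split; auto.
  - pose (delta := fun k t => proj1_sig (constructive_indefinite_description _ (dens_exists t k))).
    assert (Hd : forall k t, has_densityB k t (delta k t)).
    { intros k t. unfold delta. exact (proj2_sig (constructive_indefinite_description _ (dens_exists t k))). }
    exists delta.
    split; [exact Hd|split; [|split]].
    + intros k. apply (UL_sequence _ _ _ (Hd k 1%nat)). apply (dens_t1 (Z.to_nat (2 - k))). lia.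
    + intros k t _.
      pose proof (dens_transfer _ _ _ _ _ (fun n => inBb_even k t n) (Hd k t) (Hd k t)) as H.
      rewrite (UL_sequence _ _ _ (Hd k (2 * t)%nat) H). field.
    + intros k t _.
      pose proof (dens_transfer _ _ _ _ _ (fun n => inBb_odd k t n) (Hd (k - 1)%Z t) (Hd (k + 1)%Z (t + 1)%nat)) as H.
      rewrite (UL_sequence _ _ _ (Hd k (2 * t + 1)%nat) H). field.
Qed.
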